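(* For every large enough $n$, there exist an unweighted $n$-vertex graph $G$ and a spectral sparsifier $H$ of $G$ such that $\widehat{H}$, the unweighted version of $H$, has stretch $\widetilde{\Omega}(n^{2/3})$ with respect to $G$, i.e., there are $u,v$ with $d_{\widehat{H}}(u,v)\ge\widetilde{\Omega}(n^{2/3})\cdot d_G(u,v)$.
   Context: A spectral sparsifier of $G=(V,E)$ is a $(1\pm\varepsilon)$-spectral sparsifier for a fixed small constant $\varepsilon>0$: a weighted graph $H=(V,E_H,w)$ with $E_H\subseteq E$ and positive weights such that $(1-\varepsilon)L_H\preceq L_G\preceq(1+\varepsilon)L_H$, where $L$ denotes the (weighted) graph Laplacian and $A\preceq B$ means $x^\top Ax\le x^\top Bx$ for all $x$. $\widehat{H}$ is $(V,E_H)$ with all weights equal to $1$; $d$ denotes shortest-path distance. $\widetilde{\Omega}(f)$ means $f/\mathrm{polylog}(n)$. *)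

(* Defs.v *)
From HB Require Import structures.
From mathcomp Require Import all_boot all_order all_algebra.
From mathcomp Require Import all_classical all_reals all_analysis.
Set Implicit Arguments. Unset Strict Implicit. Unset Printing Implicit Defensive.
Import Order.TTheory GRing.Theory Num.Theory.
Local Open Scope ring_scope.

Section Graphs.
Variable R : realType.
Variable n : nat.
Implicit Types (e : rel 'I_n) (w : 'I_n -> 'I_n -> R).

Definition simple_graph e := symmetric e /\ irreflexive e.

(* Weighted Laplacian of the graph with edge relation e and edge weights w:
   L = sum over edges {i,j} of w_ij (e_i - e_j)(e_i - e_j)^T. *)
Definition laplacian e w : 'M[R]_n :=
  \matrix_(i, j) (if i == j then \sum_(k | e i k) w i k
                  else if e i j then - w i j else 0).

Definition loewner_le (A B : 'M[R]_n) : Prop :=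
  forall x : 'cV[R]_n, (x^T *m A *m x) 0 0 <= (x^T *m B *m x) 0 0.

Definition spectral_sparsifier (eps : R) (G EH : rel 'I_n) w : Prop :=
  [/\ symmetric EH, subrel EH G,
      (forall i j, EH i j -> 0 < w i j),
      (forall i j, w i j = w j i) &
      loewner_le ((1 - eps) *: laplacian EH w) (laplacian G (fun _ _ => 1)) /\
      loewner_le (laplacian G (fun _ _ => 1)) ((1 + eps) *: laplacian EH w)].

End Graphs.

Fixpoint walk (T : finType) (e : rel T) (k : nat) (u v : T) : bool :=
  if k is k'.+1 then [exists w, e u w && walk e k' w v] else u == v.

(* Shortest-path distance in the unweighted graph e (+oo if unreachable).
   A shortest walk, if any, has fewer than #|T| edges. *)
Definition dist (R : realType) (T : finType) (e : rel T) (u v : T) : \bar R :=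
  if [seq k <- iota 0 #|T| | walk e k u v] is k :: _ then ((k%:R : R)%:E)%E
  else (+oo)%E.

(* Main.v *)
Require Import Defs.
From HB Require Import structures.
From mathcomp Require Import all_boot all_order all_algebra.
From mathcomp Require Import all_classical all_reals all_analysis.
From mathcomp Require Import ring lra zify.
Import Order.TTheory GRing.Theory Num.Theory.
Local Open Scope ring_scope.

Section Aux.
Variable R : realType.

Lemma jensen (I : Type) (r : seq I) (P : pred I) (y : I -> R) :
  (\sum_(i <- r | P i) y i) ^+ 2 <=
  (\sum_(i <- r | P i) 1) * \sum_(i <- r | P i) y i ^+ 2.
Proof.
have H : 0 <= \sum_(i <- r | P i) \sum_(j <- r | P j) (y i - y j) ^+ 2.
  by apply: sumr_ge0 => i _; apply: sumr_ge0 => j _; exact: sqr_ge0.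
have E : \sum_(i <- r | P i) \sum_(j <- r | P j) (y i - y j) ^+ 2 =
   2 * ((\sum_(i <- r | P i) 1) * \sum_(i <- r | P i) y i ^+ 2)
   - 2 * (\sum_(i <- r | P i) y i) ^+ 2.
  have E1 : forall i, \sum_(j <- r | P j) (y i - y j) ^+ 2 =
     y i ^+ 2 * (\sum_(j <- r | P j) 1) + \sum_(j <- r | P j) y j ^+ 2
     - 2 * (y i * \sum_(j <- r | P j) y j).
    move=> i.
    rewrite mulr_sumr mulr_sumr mulr_sumr -!big_split -sumrN -big_split /=.
    by apply: eq_bigr => j _; rewrite mulr1; ring.
  under eq_bigr do rewrite E1.
  rewrite !big_split /= sumrN -!mulr_suml -mulr_sumr -mulr_suml.
  have -> : \sum_(i <- r | P i) \sum_(j <- r | P j) y j ^+ 2 =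
    (\sum_(i <- r | P i) 1) * \sum_(j <- r | P j) y j ^+ 2.
    by rewrite mulr_suml; apply: eq_bigr => i _; rewrite mul1r.
  ring.
rewrite E subr_ge0 in H.
by rewrite -(ler_pM2l (_ : 0 < 2)) //.
Qed.

Section Qf.
Variable n : nat.
Implicit Types (A : 'M[R]_n) (x : 'cV[R]_n).

Lemma qfE A x : (x^T *m A *m x) 0 0 = \sum_i \sum_j x i 0 * A i j * x j 0.
Proof.
rewrite mxE exchange_big /=; apply: eq_bigr => j _.
rewrite mxE big_distrl /=; apply: eq_bigr => i _; by rewrite mxE.
Qed.

Lemma qfZ a A x : (x^T *m (a *: A) *m x) 0 0 = a * (x^T *m A *m x) 0 0.
Proof. by rewrite -scalemxAr -scalemxAl mxE. Qed.

Lemma qf_lap (e : rel 'I_n) : symmetric e -> irreflexive e -> forall x,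
  2 * (x^T *m laplacian e (fun _ _ => 1) *m x) 0 0 =
  \sum_i \sum_j (if e i j then (x i 0 - x j 0) ^+ 2 else 0).
Proof.
move=> se ie x; rewrite qfE.
set y := fun i => x i 0.
have row : forall i, \sum_j x i 0 * laplacian e (fun _ _ => 1) i j * x j 0 =
   \sum_j (if e i j then y i ^+ 2 - y i * y j else 0).
  move=> i.
  have pt : forall j, x i 0 * laplacian e (fun _ _ => 1) i j * x j 0 =
     (if i == j then (\sum_(k | e i k) (1:R)) * y i ^+ 2 else 0)
     - (if e i j then y i * y j else 0).
    move=> j; rewrite mxE; case: eqP => [<-|/eqP nij]; first by rewrite ie subr0 /y; ring.
    by case: (e i j); rewrite /y; ring.
  under eq_bigr do rewrite pt.
  rewrite sumrB; under [X in _ = X]eq_bigr do rewrite (fun_if (fun z => z)).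
  have -> : \sum_j (if e i j then y i ^+ 2 - y i * y j else 0) =
     \sum_j (if e i j then y i ^+ 2 else 0) - \sum_j (if e i j then y i * y j else 0).
    by rewrite -sumrB; apply: eq_bigr => j _; case: (e i j); rewrite ?subr0.
  congr (_ - _).
  rewrite -big_mkcond /= (big_pred1 i); last by move=> j; rewrite /= eq_sym.
  rewrite mulr_suml -big_mkcond /=; apply: eq_bigr => j _; by rewrite mul1r.
under eq_bigr do rewrite row.
have sw : \sum_i \sum_j (if e i j then y j ^+ 2 - y i * y j else 0) =
          \sum_i \sum_j (if e i j then y i ^+ 2 - y i * y j else 0).
  rewrite exchange_big /=; apply: eq_bigr => i _; apply: eq_bigr => j _.
  by rewrite (se j i) mulrC.
rewrite mulr2n mulrDl mul1r.
rewrite -[X in X + _ = _]sw -big_split /=; apply: eq_bigr => i _.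
rewrite -big_split /=; apply: eq_bigr => j _.
case: (e i j); rewrite /y; last by rewrite addr0.
ring.
Qed.
End Qf.

Lemma sum_pair n (f : 'I_n -> 'I_n -> R) a b :
  \sum_i \sum_j (if (i == a) && (j == b) then f i j else 0) = f a b.
Proof.
rewrite (bigD1 a) //= [X in _ + X]big1 ?addr0; last first.
  by move=> i /negbTE ->; apply: big1.
rewrite (bigD1 b) //= eqxx [X in _ + X]big1 ?addr0 ?eqxx //.
by move=> j /negbTE ->; rewrite andbF.
Qed.

Lemma dist_ge (T : finType) (e : rel T) a b (r : \bar R) :
  (forall k, walk e k a b -> (r <= (k%:R)%:E)%E) -> (r <= dist R e a b)%E.
Proof.
move=> H; rewrite /dist.
case E: [seq k <- iota 0 #|T| | walk e k a b] => [|k s]; first exact: leey.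
apply: H; have : k \in [seq k <- iota 0 #|T| | walk e k a b] by rewrite E mem_head.
by rewrite mem_filter => /andP [].
Qed.

End Aux.

Lemma sum_single (R : realType) (f : nat -> R) c N : (c < N)%N ->
  (forall l, l != c -> f l = 0) -> \sum_(0 <= l < N) f l = f c.
Proof.
move=> cN h.
rewrite (big_cat_nat (leq0n c)) ?(ltnW cN) //= (big_cat_nat (leqnSn c)) //=.
rewrite big_nat1 !big1_seq ?add0r ?addr0 //.
  by move=> i /andP [_]; rewrite mem_index_iota => hi; apply: h; lia.
by move=> i /andP [_]; rewrite mem_index_iota => hi; apply: h; lia.
Qed.

Section Constr.
Variables (R : realType) (n m L : nat).
Hypotheses (m0 : (0 < m)%N) (L2 : (2 <= L)%N) (Ln : (L.+1 * m <= n)%N).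

Definition lay (i : 'I_n) := (i %/ m)%N.
Definition K : rel 'I_n := fun i j =>
  (((lay i).+1 == lay j) && (lay j <= L)%N) || (((lay j).+1 == lay i) && (lay i <= L)%N).

Lemma hu : (0 < n)%N. Proof. by apply: leq_trans Ln; rewrite muln_gt0 m0. Qed.
Lemma hv : (L * m < n)%N. Proof. apply: leq_trans Ln; rewrite mulSn; lia. Qed.
Definition u : 'I_n := Ordinal hu.
Definition v : 'I_n := Ordinal hv.
Lemma lay_u : lay u = 0%N. Proof. by rewrite /lay /= div0n. Qed.
Lemma lay_v : lay v = L. Proof. by rewrite /lay /= mulnK. Qed.

Lemma card_lay l : (l <= L)%N -> \sum_(i : 'I_n | lay i == l) (1:R) = m%:R.
Proof.
move=> lL.
rewrite -(big_mkord (fun i => i %/ m == l)%N (fun _ => (1:R))) big_mkcond /=.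
have h1 : (l * m <= l * m + m)%N by lia.
have h2 : (l * m + m <= n)%N by apply: leq_trans Ln; rewrite -mulSnr leq_mul2r ltnS lL orbT.
rewrite (big_cat_nat (leq0n (l * m))) ?(leq_trans h1 h2) //=.
rewrite (big_cat_nat h1) //=.
rewrite [X in X + _]big1_seq ?add0r; last first.
  move=> i /andP [_]; rewrite mem_index_iota => /andP [hi1 hi2].
  have -> : (i %/ m == l)%N = false; last by [].
  apply/negbTE; rewrite neq_ltn; apply/orP; left.
  by rewrite ltn_divLR //; lia.
rewrite [X in _ + X]big1_seq ?addr0; last first.
  move=> i /andP [_]; rewrite mem_index_iota => /andP [hi1 hi2].
  have -> : (i %/ m == l)%N = false; last by [].
  apply/negbTE; rewrite neq_ltn; apply/orP; right.
  rewrite leq_divRL //; lia.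
rewrite (eq_big_seq (fun _ => 1)); last first.
    move=> i; rewrite mem_index_iota => /andP [hi1 hi2].
    have -> : (i %/ m == l)%N; last by [].
    rewrite eqn_leq leq_divRL // hi1 andbT -ltnS ltn_divLR //; lia.
  by rewrite sumr_const_nat addKn.
Qed.

Lemma walk_lay k a b : walk K k a b -> (lay b <= lay a + k)%N.
Proof.
elim: k a => [|k IH] a /=; first by move/eqP->; rewrite addn0.
case/existsP => w /andP [Kaw /IH hw].
move: Kaw; rewrite /K => /orP [/andP [/eqP h _]|/andP [/eqP h _]]; lia.
Qed.

Lemma core (y : 'I_n -> R) :
  (m%:R) ^+ 2 * (y u - y v) ^+ 2 <=
  3 * (m + L)%:R * \sum_i \sum_j (if K i j then (y i - y j) ^+ 2 else 0).
Proof.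
set g := fun a b => (y a - y b) ^+ 2.
set F := \sum_i \sum_j _.
set sig := fun l => \sum_(i | lay i == l) y i.
set T := fun l => \sum_(a | lay a == l) \sum_(b | lay b == l.+1) g a b.
have g0 : forall a b, 0 <= g a b by move=> a b; exact: sqr_ge0.
have T0 : forall l, 0 <= T l.
  by move=> l; apply: sumr_ge0 => a _; apply: sumr_ge0 => b _.
have FT : \sum_(0 <= l < L) T l <= F.
  have E : forall l, T l = \sum_a \sum_b
      (if (lay a == l) && (lay b == l.+1) then g a b else 0).
    move=> l; rewrite /T big_mkcond; apply: eq_bigr => a _.
    case: (lay a == l) => /=; first by rewrite big_mkcond.
    by rewrite big1.
  under eq_bigr do rewrite E.
  rewrite exchange_big /=; apply: ler_sum => a _.
  rewrite exchange_big /=; apply: ler_sum => b _.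
  have RHS0 : 0 <= (if K a b then g a b else 0) by case: (K a b).
  case: (ltnP (lay a) L) => haL.
    rewrite (@sum_single R _ (lay a)) //; last first.
      by move=> l hl; rewrite eq_sym (negbTE hl).
    rewrite eqxx /=; case hb: (lay b == (lay a).+1) => //.
    have -> : K a b by rewrite /K (eqP hb) eqxx /= haL.
    by [].
  rewrite big1_seq; first by []. move=> l /andP [_]; rewrite mem_index_iota => /andP [_ hl].
  case: eqP => //= hal; lia.
have L1 : (0 < L)%N by lia.
set S1 := \sum_(b | lay b == 1%N) g u b.
set S3 := \sum_(a | lay a == L.-1) g a v.
set S2 := \sum_(1 <= l < L.-1) T l.
have S1T : S1 <= T 0%N.
  rewrite /T (bigD1 u) /=; last by rewrite lay_u.
  by rewrite lerDl; apply: sumr_ge0 => a _; apply: sumr_ge0 => b _.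
have S3T : S3 <= T L.-1.
  rewrite /T; apply: ler_sum => a _; rewrite (bigD1 v) /=; last by rewrite lay_v prednK.
  by rewrite lerDl; apply: sumr_ge0 => b _.
have S20 : 0 <= S2 by apply: sumr_ge0 => l _.
have S10 : 0 <= S1 by apply: sumr_ge0 => b _.
have S30 : 0 <= S3 by apply: sumr_ge0 => b _.
have TS : \sum_(0 <= l < L) T l = T 0%N + S2 + T L.-1.
  have EL : L = (L.-2).+2 by lia.
  have EL1 : L.-1 = (L.-2).+1 by lia.
  rewrite /S2 EL1 big_add1 /= -EL1.
  have -> : \sum_(0 <= l < L) T l = \sum_(0 <= l < (L.-2).+2) T l by rewrite -EL.
  by rewrite big_nat_recr //= big_nat_recl //= EL1.
have d0 : (m%:R * y u - sig 1%N) ^+ 2 <= m%:R * S1.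
  have -> : m%:R * y u - sig 1%N = \sum_(b | lay b == 1%N) (y u - y b).
    rewrite sumrB; congr (_ - _); rewrite -(card_lay (1%N)); last by lia.
    by rewrite mulr_suml; apply: eq_bigr => b _; rewrite mul1r.
  apply: le_trans (@jensen R _ _ _ _) _.
  by rewrite card_lay //; lia.
have d2 : (sig L.-1 - m%:R * y v) ^+ 2 <= m%:R * S3.
  have -> : sig L.-1 - m%:R * y v = \sum_(a | lay a == L.-1) (y a - y v).
    rewrite sumrB; congr (_ - _); rewrite -(card_lay (L.-1)); last by lia.
    by rewrite mulr_suml; apply: eq_bigr => b _; rewrite mul1r.
  apply: le_trans (@jensen R _ _ _ _) _.
  by rewrite card_lay //; lia.
have dl : forall l, (l < L)%N -> (sig l - sig l.+1) ^+ 2 <= T l.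
  move=> l hl.
  have E : m%:R * (sig l - sig l.+1) = \sum_(a | lay a == l) \sum_(b | lay b == l.+1) (y a - y b).
    have -> : \sum_(a | lay a == l) \sum_(b | lay b == l.+1) (y a - y b) =
       \sum_(a | lay a == l) (m%:R * y a - sig l.+1).
      apply: eq_bigr => a _; rewrite sumrB; congr (_ - _).
      rewrite -(card_lay (l.+1) hl) mulr_suml; apply: eq_bigr => b _; by rewrite mul1r.
    rewrite sumrB -mulr_sumr mulrBr; congr (_ - _).
    rewrite -(card_lay l (ltnW hl)) mulr_suml; apply: eq_bigr => b _; by rewrite mul1r.
  have m0' : 0 < (m%:R : R) ^+ 2 by rewrite exprn_gt0 // ltr0n.
  rewrite -(ler_pM2l m0') -exprMn E.
  apply: le_trans (@jensen R _ _ _ _) _.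
  rewrite card_lay ?(ltnW hl) // expr2 -mulrA; apply: ler_wpM2l; first by rewrite ler0n.
  rewrite /T mulr_sumr; apply: ler_sum => a _.
  apply: le_trans (@jensen R _ _ _ _) _.
  by rewrite card_lay.
have D : (sig 1%N - sig L.-1) ^+ 2 <= (L.-2)%:R * S2.
  have -> : sig 1%N - sig L.-1 = \sum_(1 <= l < L.-1) (sig l - sig l.+1).
    rewrite -opprB -(telescope_sumr (fun l => sig l)); last by lia.
    by rewrite -sumrN; apply: eq_bigr => l _; rewrite opprB.
  apply: le_trans (@jensen R _ _ _ _) _.
  rewrite sumr_const_nat.
  have -> : (L.-1 - 1)%N = L.-2 by lia.
  rewrite -mulr_natl mulr1; apply: ler_wpM2l; first by rewrite ler0n.
  by apply: ler_sum_nat => l /andP [_ hl]; apply: dl; lia.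
have key : m%:R * (y u - y v) = (m%:R * y u - sig 1%N) + (sig 1%N - sig L.-1)
   + (sig L.-1 - m%:R * y v) by ring.
rewrite -exprMn key.
set a := m%:R * y u - sig 1%N.
set b := sig 1%N - sig L.-1.
set c := sig L.-1 - m%:R * y v.
move: d0 D d2; rewrite -/a -/b -/c => d0 D d2.
have h3 : (a + b + c) ^+ 2 <= 3 * (a ^+ 2 + b ^+ 2 + c ^+ 2).
  have e : 3 * (a ^+ 2 + b ^+ 2 + c ^+ 2) - (a + b + c) ^+ 2 =
     (a - b) ^+ 2 + (b - c) ^+ 2 + (a - c) ^+ 2 by ring.
  rewrite -subr_ge0 e; apply: addr_ge0; first apply: addr_ge0; exact: sqr_ge0.
set M := (m + L)%:R : R.
have M0 : 0 <= M by rewrite ler0n.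
have hm : m%:R <= M by rewrite ler_nat; lia.
have hL : (L.-2)%:R <= M by rewrite ler_nat; lia.
have p1 : m%:R * S1 <= M * S1 by apply: ler_wpM2r.
have p2 : (L.-2)%:R * S2 <= M * S2 by apply: ler_wpM2r.
have p3 : m%:R * S3 <= M * S3 by apply: ler_wpM2r.
have p5 : M * (S1 + S2 + S3) <= M * F.
  apply: ler_wpM2l => //; lra.
rewrite !mulrDr in p5.
lra.
Qed.

Definition G : rel 'I_n := fun i j =>
  K i j || ((i == u) && (j == v)) || ((i == v) && (j == u)).

Lemma Ksym : symmetric K. Proof. by move=> i j; rewrite /K orbC. Qed.
Lemma Kirr : irreflexive K.
Proof. move=> i; rewrite /K; apply/negbTE/negP; case/orP => /andP [/eqP h _]; lia. Qed.
Lemma uv : u != v.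
Proof. apply/eqP => h; have := congr1 lay h; rewrite lay_u lay_v; lia. Qed.
Lemma Kuv : K u v = false.
Proof. rewrite /K lay_u lay_v; apply/negbTE/negP; case/orP => /andP [/eqP h _]; lia. Qed.
Lemma Kvu : K v u = false.
Proof. by rewrite Ksym Kuv. Qed.
Lemma Gsym : symmetric G.
Proof.
move=> i j; rewrite /G Ksym; case: (K j i) => //=.
by rewrite orbC (andbC (j == u)) (andbC (j == v)).
Qed.
Lemma Girr : irreflexive G.
Proof.
move=> i; rewrite /G Kirr /=; apply/negbTE/negP.
by case/orP => /andP [/eqP h1 /eqP h2]; have := uv; rewrite -h1 -h2 eqxx.
Qed.

Lemma sumG (f : 'I_n -> 'I_n -> R) :
  \sum_i \sum_j (if G i j then f i j else 0) =
  \sum_i \sum_j (if K i j then f i j else 0) + f u v + f v u.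
Proof.
rewrite -(@sum_pair R n f u v) -(@sum_pair R n f v u) -!big_split /=; apply: eq_bigr => i _.
rewrite -!big_split; apply: eq_bigr => j _ /=.
rewrite /G.
have [Kij|Kij] := boolP (K i j).
  have h1 : (i == u) && (j == v) = false.
    by apply/negbTE/negP => /andP [/eqP hi /eqP hj]; move: Kij; rewrite hi hj Kuv.
  have h2 : (i == v) && (j == u) = false.
    by apply/negbTE/negP => /andP [/eqP hi /eqP hj]; move: Kij; rewrite hi hj Kvu.
  by rewrite h1 h2 /= !addr0.
rewrite /= add0r.
have [/andP [/eqP hi /eqP hj]|h1] := boolP ((i == u) && (j == v)).
  have h2 : (i == v) && (j == u) = false.
    by rewrite hi hj (negbTE uv).
  by rewrite h2 addr0.
rewrite /= add0r.
by case: ((i == v) && (j == u)).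
Qed.

Lemma construct (eps : R) : 0 < eps ->
  6 * (m + L)%:R <= eps * (m%:R) ^+ 2 ->
  [/\ simple_graph G, spectral_sparsifier eps G K (fun _ _ => 1),
      u != v, dist R G u v = ((1%:R : R)%:E) &
      forall k, walk K k u v -> (L <= k)%N].
Proof.
move=> eps0 heps.
have QG : forall x : 'cV[R]_n,
    (x^T *m laplacian G (fun _ _ => 1) *m x) 0 0 =
    (x^T *m laplacian K (fun _ _ => 1) *m x) 0 0 + (x u 0 - x v 0) ^+ 2.
  move=> x.
  have hG := @qf_lap R n G Gsym Girr x.
  have hK := @qf_lap R n K Ksym Kirr x.
  rewrite sumG -hK in hG.
  have e : (x v 0 - x u 0) ^+ 2 = (x u 0 - x v 0) ^+ 2 by rewrite -sqrrN opprB.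
  rewrite e in hG; lra.
have QK0 : forall x : 'cV[R]_n, 0 <= (x^T *m laplacian K (fun _ _ => 1) *m x) 0 0.
  move=> x; have hK := @qf_lap R n K Ksym Kirr x.
  have : 0 <= \sum_i \sum_j (if K i j then (x i 0 - x j 0) ^+ 2 else 0).
    apply: sumr_ge0 => i _; apply: sumr_ge0 => j _; case: (K i j) => //; exact: sqr_ge0.
  lra.
have QB : forall x : 'cV[R]_n, (x u 0 - x v 0) ^+ 2 <=
    eps * (x^T *m laplacian K (fun _ _ => 1) *m x) 0 0.
  move=> x; have hK := @qf_lap R n K Ksym Kirr x.
  have hc := core (fun i => x i 0).
  rewrite -hK in hc.
  set q := (x^T *m _ *m x) 0 0 in hK hc *.
  have q0 : 0 <= q by exact: QK0.
  set d := (x u 0 - x v 0) ^+ 2 in hc *.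
  have m2 : 0 < (m%:R : R) ^+ 2 by rewrite exprn_gt0 // ltr0n.
  rewrite -(ler_pM2l m2); apply: le_trans hc _.
  have := ler_wpM2r q0 heps; lra.
split.
- by split; [exact: Gsym | exact: Girr].
- split.
  + exact: Ksym.
  + by move=> i j Kij; rewrite /G Kij.
  + by move=> *; exact: ltr01.
  + by [].
  + split => x; rewrite qfZ QG.
      have := QK0 x; have := sqr_ge0 (x u 0 - x v 0).
      have : 0 <= eps * (x^T *m laplacian K (fun _ _ => 1) *m x) 0 0.
        by apply: mulr_ge0; [exact: ltW | exact: QK0].
      lra.
    have := QB x; lra.
- exact: uv.
- have n2 : (2 <= n)%N by apply: leq_trans Ln; rewrite mulSn; lia.
  have E : iota 0 n = [:: 0%N, 1%N & iota 2 (n - 2)] by rewrite -{1}(subnKC n2) iotaD.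
  have w0 : walk G 0 u v = false by rewrite /= (negbTE uv).
  have w1 : walk G 1 u v.
    by rewrite /=; apply/existsP; exists v; rewrite eqxx andbT /G !eqxx /= orbT.
  move: w1 => /= w1; rewrite /dist card_ord E /= (negbTE uv) w1. reflexivity.
- by move=> k /walk_lay; rewrite lay_u lay_v.
Qed.

End Constr.

Theorem lemma4p4 (R : realType) (eps : R) : 0 < eps ->
  exists (c : R) (k N : nat), 0 < c /\
  forall n : nat, (N <= n)%N ->
  exists (G EH : rel 'I_n) (w : 'I_n -> 'I_n -> R),
    [/\ simple_graph G,
        spectral_sparsifier eps G EH w &
        exists u v : 'I_n,
          [/\ u != v, (dist R G u v < +oo)%E &
              ((c * (n%:R `^ (2 / 3)) / (ln (n%:R : R)) ^+ k)%:E
                 * dist R G u v <= dist R EH u v)%E]].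
Proof.
move=> eps0.
pose A := (Num.Def.archi_bound (12 / eps)).+1.
have hA : 12 <= eps * A%:R.
  have h0 : 0 <= 12 / eps by apply: divr_ge0 => //; exact: ltW.
  have := archi_boundP h0; rewrite /A.
  set b := Num.Def.archi_bound _ => hb.
  rewrite -ler_pdivrMl // mulrC; apply: (le_trans (ltW hb)).
  by rewrite ler_nat.
have A1 : (1 <= A)%N by [].
have a1 : 1 <= (A%:R : R) by rewrite ler1n.
exists (1 / (8 * A%:R)), 0%N, (16 * A)%N; split.
  by rewrite divr_gt0 // mulr_gt0 // ltr0n.
move=> n hn.
pose P := fun t => (2 * A * t ^ 3 <= n)%N.
have exP : exists t, P t by exists 2%N; rewrite /P; lia.
have ubP : forall t, P t -> (t <= n)%N.
  by move=> t; rewrite /P => h; apply: leq_trans h; nia.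
case: (ex_maxnP exP ubP) => t Pt tmax.
have t2 : (2 <= t)%N by apply: tmax; rewrite /P; lia.
have nt : (n < 2 * A * t.+1 ^ 3)%N.
  rewrite ltnNge; apply/negP => h; have := tmax _ h; lia.
move: Pt; rewrite /P => Pt.
have m0 : (0 < A * t)%N by nia.
have L2 : (2 <= t ^ 2)%N by nia.
have Ln : ((t ^ 2).+1 * (A * t) <= n)%N by nia.
have heps : 6 * (A * t + t ^ 2)%:R <= eps * ((A * t)%:R) ^+ 2.
  rewrite natrD !natrM -[t%:R * t%:R]expr2.
  set a : R := A%:R; set tt : R := t%:R.
  have tt1 : 1 <= tt by rewrite /tt ler1n; lia.
  have e1 : tt <= tt ^+ 2 by rewrite expr2 ler_peMl // (le_trans ler01 tt1).
  have e2 : a * tt <= a * tt ^+ 2 by apply: ler_wpM2l => //; exact: le_trans ler01 a1.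
  have e3 : tt ^+ 2 <= a * tt ^+ 2 by rewrite ler_peMl // exprn_ge0 // (le_trans ler01 tt1).
  have e4 : 12 * (a * tt ^+ 2) <= (eps * a) * (a * tt ^+ 2).
    apply: ler_wpM2r => //; apply: mulr_ge0; [exact: le_trans ler01 a1 | exact: exprn_ge0 (le_trans ler01 tt1)].
  have e5 : eps * (a * tt) ^+ 2 = (eps * a) * (a * tt ^+ 2) by ring.
  rewrite e5; lra.
have [sg sp uv dG wK] := @construct R n (A * t) (t ^ 2) m0 L2 Ln eps eps0 heps.
eexists; eexists; exists (fun _ _ => 1); split; [exact: sg | exact: sp | ].
eexists; eexists; split; [exact: uv | by rewrite dG ltry | ].
rewrite dG expr0 divr1 -EFinM mulr1.
apply: dist_ge => k /wK hk; rewrite lee_fin.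
apply: (@le_trans _ _ ((t ^ 2)%:R)); last by rewrite ler_nat.
have h1 : (t.+1 ^ 3 <= 8 * t ^ 3)%N.
  have h : (t.+1 <= 2 * t)%N by lia.
  have := leq_mul (leq_mul h h) h.
  rewrite !expnS expn0 !muln1; nia.
have h2 : (n <= 16 * A * t ^ 3)%N.
  have := leq_mul (leqnn (2 * A)) h1; rewrite -mulnA; lia.
set a : R := A%:R; set tt : R := t%:R.
have tt1 : 1 <= tt by rewrite /tt ler1n; lia.
have a0 : 0 <= a by exact: le_trans ler01 a1.
have tt0 : 0 <= tt by exact: le_trans ler01 tt1.
have hn' : n%:R <= 16 * a * tt ^+ 3.
  by rewrite /a /tt -natrX -!natrM ler_nat.
set p := n%:R `^ (2 / 3).
have p0 : 0 <= p by exact: powR_ge0.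
have p3 : p ^+ 3 = n%:R ^+ 2.
  rewrite /p -powR_mulrn ?powR_ge0 // -powRrM.
  have -> : (2 / 3 * 3%:R : R) = 2%:R by field.
  by rewrite powR_mulrn // ler0n.
have c0 : 0 <= 1 / (8 * a) by apply: divr_ge0 => //; apply: mulr_ge0.
rewrite natrX -/tt.
rewrite -(@ler_pXn2r _ 3) // ?nnegrE ?exprn_ge0 ?mulr_ge0 //.
rewrite exprMn p3 expr_div_n expr1n mul1r mulrC ler_pdivrMr; last first.
  by rewrite exprn_gt0 // mulr_gt0 // (lt_le_trans ltr01 a1).
have q1 : n%:R ^+ 2 <= (16 * a * tt ^+ 3) ^+ 2.
  by rewrite ler_pXn2r // ?nnegrE ?ler0n // !mulr_ge0 // exprn_ge0.
apply: le_trans q1 _.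
have e : (tt ^+ 2) ^+ 3 * (8 * a) ^+ 3 = 2 * a * ((16 * a * tt ^+ 3) ^+ 2) by ring.
rewrite e; set X := (_ ^+ 2).
have X0 : 0 <= X by exact: sqr_ge0.
have hX : 0 <= (a - 1) * X by apply: mulr_ge0 => //; rewrite subr_ge0.
lra.
all: by rewrite invr_ge0 mulr_ge0.
Qed.
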